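(* Let $\mathcal{L}$ be a language on the alphabet $\{a,b\}$ and let ${\rm S}:\mathcal{L}\to\mathbb{N}_0\times\mathbb{N}_0$ be a homomorphism. If $\{{\rm S}(a),{\rm S}(b)\}\neq\{(0,1),(1,0)\}$, then $(\mathbb{N}_0\times\mathbb{N}_0)\setminus{\rm S}(\mathcal{L})$ is infinite.
   Context: $\mathbb{N}_0=\{0,1,2,\dots\}$. A language on $\{a,b\}$ is a set of nonempty finite words over $\{a,b\}$ closed under concatenation (a sub-semigroup of the free semigroup on $\{a,b\}$). A homomorphism ${\rm S}:\mathcal{L}\to\mathbb{N}_0\times\mathbb{N}_0$ is a map with ${\rm S}(w_1\cdots w_n)={\rm S}(w_1)+\cdots+{\rm S}(w_n)$ (coordinatewise addition), determined by the vectors ${\rm S}(a),{\rm S}(b)$. *)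

(* Defs.v *)
From mathcomp Require Import all_boot.
Set Implicit Arguments. Unset Strict Implicit. Unset Printing Implicit Defensive.

Inductive letter : Type := La | Lb.

Definition word := seq letter.

Definition language (L : word -> Prop) : Prop :=
  (forall w, L w -> w <> [::]) /\
  (forall u v, L u -> L v -> L (u ++ v)).

Definition addp (p q : nat * nat) : nat * nat := (p.1 + q.1, p.2 + q.2).

Definition Shom (Sa Sb : nat * nat) (w : word) : nat * nat :=
  foldr (fun x acc => addp (if x is La then Sa else Sb) acc) (0, 0) w.

Definition image_S (L : word -> Prop) (Sa Sb : nat * nat) (p : nat * nat) : Prop :=
  exists w, L w /\ Shom Sa Sb w = p.

Definition finite_set (A : nat * nat -> Prop) : Prop :=
  exists s : seq (nat * nat), forall p, A p -> p \in s.

(* Main.v *)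
Require Import Defs.
From mathcomp Require Import all_boot.
From mathcomp Require Import zify.

Definition rep (a1 a2 b1 b2 : nat) (p : nat * nat) :=
  exists m n, p.1 = m*a1 + n*b1 /\ p.2 = m*a2 + n*b2.

Definition isA (x : letter) : bool := if x is La then true else false.

Lemma Shom_rep a1 a2 b1 b2 w :
  Shom (a1,a2) (b1,b2) w =
  (count isA w * a1 + count (predC isA) w * b1, count isA w * a2 + count (predC isA) w * b2).
Proof.
elim: w => [|x w IH] //=; rewrite IH /addp /=; case: x => /=; congr pair; lia.
Qed.

Lemma key a1 a2 b1 b2 B :
  ~ ((a1, a2) = (0, 1) /\ (b1, b2) = (1, 0) \/ (a1, a2) = (1, 0) /\ (b1, b2) = (0, 1)) ->
  exists p, B < p.1 + p.2 /\ ~ rep a1 a2 b1 b2 p.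
Proof.
move=> Hne.
have [Ha1|Ha1] := eqVneq a1 1; have [Hb1|Hb1] := eqVneq b1 1.
- subst. exists (1, B + a2 + b2 + 1); split => /=; first nia.
  move=> [m [n [/= H1 H2]]]; nia.
- subst. have [Hb10|Hb10] := eqVneq b1 0.
  + subst. have [Hb2|Hb2] := eqVneq b2 1.
    * subst. have [Ha2|Ha2] := eqVneq a2 0; first by subst; case: Hne; right.
      exists (B+2, 1); split => /=; first lia.
      move=> [m [n [/= H1 H2]]].
      have Hm : m = B+2 by lia. subst m.
      have : 0 < a2 by lia. nia.
    * have [Hz|Hz] := eqVneq b2 0.
        subst. exists (1, a2 + B + 1); split => /=; first nia.
        move=> [m [n [/= H1 H2]]]; nia.
      exists (1, a2 + (B+1)*b2 + 1); split => /=; first nia.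
      move=> [m [n [/= H1 H2]]].
      have Hm : m = 1 by lia. subst m.
      have H3 : n * b2 = (B+1)*b2 + 1 by lia.
      have : b2 %| 1.
        by rewrite -(dvdn_addr 1 (dvdn_mull (B+1) (dvdnn b2))) -H3 dvdn_mull.
      by rewrite dvdn1 (negbTE Hb2).
  + exists (1, B + a2 + b2 + 1); split => /=; first nia.
    move=> [m [n [/= H1 H2]]]; nia.
- subst. have [Ha10|Ha10] := eqVneq a1 0.
  + subst. have [Ha2|Ha2] := eqVneq a2 1.
    * subst. have [Hb2|Hb2] := eqVneq b2 0; first by subst; case: Hne; left.
      exists (B+2, 1); split => /=; first lia.
      move=> [m [n [/= H1 H2]]].
      have Hm : n = B+2 by lia. subst n.
      have : 0 < b2 by lia. nia.
    * have [Hz|Hz] := eqVneq a2 0.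
        subst. exists (1, b2 + B + 1); split => /=; first nia.
        move=> [m [n [/= H1 H2]]]; nia.
      exists (1, b2 + (B+1)*a2 + 1); split => /=; first nia.
      move=> [m [n [/= H1 H2]]].
      have Hn : n = 1 by lia. subst n.
      have H3 : m * a2 = (B+1)*a2 + 1 by lia.
      have : a2 %| 1.
        by rewrite -(dvdn_addr 1 (dvdn_mull (B+1) (dvdnn a2))) -H3 dvdn_mull.
      by rewrite dvdn1 (negbTE Ha2).
  + exists (1, B + a2 + b2 + 1); split => /=; first nia.
    move=> [m [n [/= H1 H2]]]; nia.
- exists (1, B); split => /=; first lia.
  move=> [m [n [/= H1 H2]]].
  have [E|E] : m * a1 = 1 \/ n * b1 = 1 by lia.
  + by move/eqP: E; rewrite muln_eq1 (negbTE Ha1) andbF.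
  + by move/eqP: E; rewrite muln_eq1 (negbTE Hb1) andbF.
Qed.

Theorem proposition9 (L : word -> Prop) (Sa Sb : nat * nat) :
  language L ->
  ~ ((Sa = (0, 1) /\ Sb = (1, 0)) \/ (Sa = (1, 0) /\ Sb = (0, 1))) ->
  ~ finite_set (fun p => ~ image_S L Sa Sb p).
Proof.
case: Sa => a1 a2; case: Sb => b1 b2 _ Hne [s Hs].
have [p [HB Hp]] := @key a1 a2 b1 b2 (\sum_(q <- s) (q.1 + q.2)) Hne.
have Hin : p \in s.
  apply: Hs => [[w [_ Hw]]]; apply: Hp.
  exists (count isA w), (count (predC isA) w); by rewrite -Hw Shom_rep.
move: HB; rewrite (big_rem p Hin) /=; lia.
Qed.
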